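(* Let $\mu$ be a probability measure on $\mathbb{Z}$ and let $0<b<1/4$ and $0\le c<1$. If $|\hat{\mu}(t)|\le c$ for all $t$ with $b\le |t|<1/2$, then $$|\hat{\mu}(t)|\le 1-\frac{1-c^2}{8b^2}\,t^2\quad\text{for all } |t|\le b.$$
   Context: The Fourier transform of a probability measure $\mu$ on $\mathbb{Z}$ is $\hat{\mu}(t)=\sum_{k\in\mathbb{Z}}\mu(k)e^{2\pi ikt}$, $t\in[-1/2,1/2)$. *)

(* Defs.v *)
From Stdlib Require Import Reals ZArith ClassicalEpsilon.
Open Scope R_scope.

Definition Zsum_conv (f : Z -> R) (l : R) : Prop :=
  exists l1 l2,
    infinite_sum (fun n : nat => f (Z.of_nat n)) l1 /\
    infinite_sum (fun n : nat => f (- Z.of_nat (S n))%Z) l2 /\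
    l = l1 + l2.

(* The value of sum_{k in Z} f k (when it converges; limits are unique). *)
Definition Zsum (f : Z -> R) : R :=
  epsilon (inhabits 0) (Zsum_conv f).

Definition is_prob_measure (mu : Z -> R) : Prop :=
  (forall k, 0 <= mu k) /\ Zsum_conv mu 1.

(* Real and imaginary parts of hat mu (t) = sum_k mu(k) e^{2 pi i k t}. *)
Definition ft_re (mu : Z -> R) (t : R) : R :=
  Zsum (fun k => mu k * cos (2 * PI * IZR k * t)).
Definition ft_im (mu : Z -> R) (t : R) : R :=
  Zsum (fun k => mu k * sin (2 * PI * IZR k * t)).

Definition ft_abs (mu : Z -> R) (t : R) : R :=
  sqrt (ft_re mu t ^ 2 + ft_im mu t ^ 2).

(* Main.v *)
Require Import Defs.
From Stdlib Require Import Reals ZArith Lra Lia Psatz ClassicalEpsilon.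
Open Scope R_scope.

Lemma is_Un (s : nat -> R) l : infinite_sum s l <-> Un_cv (sum_f_R0 s) l.
Proof. split; intro H; exact H. Qed.

Lemma n_ext f g l : (forall n, f n = g n) -> infinite_sum f l -> infinite_sum g l.
Proof.
  intros E H. apply is_Un. apply is_Un in H.
  intros e He. destruct (H e He) as [N HN]. exists N. intros n Hn.
  rewrite (sum_eq g f n) by (intros; symmetry; apply E). now apply HN.
Qed.

Lemma n_plus f g l1 l2 : infinite_sum f l1 -> infinite_sum g l2 ->
  infinite_sum (fun n => f n + g n) (l1 + l2).
Proof.
  intros H1 H2. apply is_Un. apply is_Un in H1. apply is_Un in H2.
  intros e He. destruct (CV_plus _ _ _ _ H1 H2 e He) as [N HN]. exists N.
  intros n Hn. rewrite plus_sum. now apply HN.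
Qed.

Lemma cst_cv a : Un_cv (fun _ : nat => a) a.
Proof. intros e He. exists 0%nat. intros. unfold Rdist. rewrite Rminus_diag, Rabs_R0. lra. Qed.

Lemma n_scal a f l : infinite_sum f l -> infinite_sum (fun n => a * f n) (a * l).
Proof.
  intros H. apply is_Un. apply is_Un in H.
  intros e He. destruct (CV_mult _ _ _ _ (cst_cv a) H e He) as [N HN]. exists N.
  intros n Hn. rewrite (sum_eq _ (fun i => f i * a) n) by (intros; ring). rewrite <- scal_sum. now apply HN.
Qed.

Lemma n_le f g l1 l2 : (forall n, f n <= g n) -> infinite_sum f l1 -> infinite_sum g l2 -> l1 <= l2.
Proof.
  intros E H1 H2. apply is_Un in H1. apply is_Un in H2.
  exact (@Rle_cv_lim _ _ _ _ (fun n => sum_Rle f g n (fun i _ => E i)) H1 H2).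
Qed.

Lemma n_comp f g l : (forall n, 0 <= f n <= g n) -> infinite_sum g l -> exists l', infinite_sum f l'.
Proof.
  intros E H. apply is_Un in H.
  destruct (Rseries_CV_comp f g E (exist _ l H)) as [l' Hl']. exists l'. now apply is_Un.
Qed.

Lemma n_unique f l1 l2 : infinite_sum f l1 -> infinite_sum f l2 -> l1 = l2.
Proof. intros H1 H2. apply is_Un in H1. apply is_Un in H2. exact (UL_sequence _ _ _ H1 H2). Qed.

Lemma Z_unique f l1 l2 : Zsum_conv f l1 -> Zsum_conv f l2 -> l1 = l2.
Proof.
  intros (a1 & b1 & H1 & H2 & ->) (a2 & b2 & H3 & H4 & ->).
  rewrite (n_unique _ _ _ H1 H3), (n_unique _ _ _ H2 H4). reflexivity.
Qed.

Lemma Z_sum f l : Zsum_conv f l -> Zsum f = l.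
Proof.
  intros H. unfold Zsum.
  apply (Z_unique f). 2: exact H.
  apply (epsilon_spec (inhabits 0) (Zsum_conv f)). now exists l.
Qed.

Lemma Z_ext f g l : (forall k, f k = g k) -> Zsum_conv f l -> Zsum_conv g l.
Proof.
  intros E (a & b & H1 & H2 & ->). exists a, b. split; [|split; [|reflexivity]];
  (eapply n_ext; [|eassumption]); intros; apply E.
Qed.

Lemma Z_plus f g l1 l2 : Zsum_conv f l1 -> Zsum_conv g l2 ->
  Zsum_conv (fun k => f k + g k) (l1 + l2).
Proof.
  intros (a1 & b1 & H1 & H2 & ->) (a2 & b2 & H3 & H4 & ->).
  exists (a1 + a2), (b1 + b2). split; [|split].
  - exact (n_plus _ _ _ _ H1 H3).
  - exact (n_plus _ _ _ _ H2 H4).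
  - ring.
Qed.

Lemma Z_scal a f l : Zsum_conv f l -> Zsum_conv (fun k => a * f k) (a * l).
Proof.
  intros (a1 & b1 & H1 & H2 & ->). exists (a * a1), (a * b1). split; [|split].
  - exact (n_scal _ _ _ H1).
  - exact (n_scal _ _ _ H2).
  - ring.
Qed.

Lemma Z_le f g l1 l2 : (forall k, f k <= g k) -> Zsum_conv f l1 -> Zsum_conv g l2 -> l1 <= l2.
Proof.
  intros E (a1 & b1 & H1 & H2 & ->) (a2 & b2 & H3 & H4 & ->).
  pose proof (n_le _ _ _ _ (fun n => E _) H1 H3).
  pose proof (n_le _ _ _ _ (fun n => E _) H2 H4). lra.
Qed.

Lemma Z_comp f g l : (forall k, 0 <= f k <= g k) -> Zsum_conv g l -> exists l', Zsum_conv f l'.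
Proof.
  intros E (a & b & H1 & H2 & ->).
  destruct (n_comp (fun n => f (Z.of_nat n)) _ _ (fun n => E _) H1) as [a' Ha].
  destruct (n_comp (fun n => f (- Z.of_nat (S n))%Z) _ _ (fun n => E _) H2) as [b' Hb].
  exists (a' + b'), a', b'. auto.
Qed.

Lemma Z_bounded mu f : is_prob_measure mu -> (forall k, Rabs (f k) <= mu k) ->
  exists l, Zsum_conv f l.
Proof.
  intros [Hp H1] E.
  assert (H2 := Z_scal 2 _ _ H1).
  assert (E' : forall k, 0 <= f k + mu k <= 2 * mu k).
  { intros k. pose proof (E k) as Ek; pose proof (Rle_abs (f k)); pose proof (Rabs_Ropp (f k)); pose proof (Rle_abs (- f k)); split; lra. }
  destruct (Z_comp (fun k => f k + mu k) _ _ E' H2) as [l Hl].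
  assert (H3 := Z_plus _ _ _ _ Hl (Z_scal (-1) _ _ H1)).
  exists (l + -1 * 1). eapply Z_ext; [|exact H3]. intros; simpl; ring.
Qed.

Definition th (k : Z) (t : R) := 2 * PI * IZR k * t.

Lemma conv_cos mu t : is_prob_measure mu -> Zsum_conv (fun k => mu k * cos (th k t)) (ft_re mu t).
Proof.
  intros Hm. destruct (Z_bounded mu (fun k => mu k * cos (th k t)) Hm) as [l Hl].
  - intros k. destruct Hm as [Hp _]. rewrite Rabs_mult, (Rabs_right (mu k)) by (apply Rle_ge, Hp).
    pose proof (COS_bound (th k t)). pose proof (Hp k).
    assert (Rabs (cos (th k t)) <= 1) by (apply Rabs_le; lra). nra.
  - unfold ft_re. change (fun k => mu k * cos (2 * PI * IZR k * t)) with (fun k => mu k * cos (th k t)). rewrite (Z_sum _ _ Hl). exact Hl.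
Qed.

Lemma conv_sin mu t : is_prob_measure mu -> Zsum_conv (fun k => mu k * sin (th k t)) (ft_im mu t).
Proof.
  intros Hm. destruct (Z_bounded mu (fun k => mu k * sin (th k t)) Hm) as [l Hl].
  - intros k. destruct Hm as [Hp _]. rewrite Rabs_mult, (Rabs_right (mu k)) by (apply Rle_ge, Hp).
    pose proof (SIN_bound (th k t)). pose proof (Hp k).
    assert (Rabs (sin (th k t)) <= 1) by (apply Rabs_le; lra). nra.
  - unfold ft_im. change (fun k => mu k * sin (2 * PI * IZR k * t)) with (fun k => mu k * sin (th k t)). rewrite (Z_sum _ _ Hl). exact Hl.
Qed.

Lemma cs_ineq u v p q : u ^ 2 + v ^ 2 = 1 -> u * p + v * q <= sqrt (p ^ 2 + q ^ 2).
Proof.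
  intros H. destruct (Rle_or_lt (u * p + v * q) 0) as [Hn|Hp].
  - pose proof (sqrt_pos (p ^ 2 + q ^ 2)). lra.
  - rewrite <- (sqrt_pow2 (u * p + v * q)) by lra. apply sqrt_le_1_alt.
    assert (0 <= (u*q - v*p)^2) by apply pow2_ge_0. nra.
Qed.

Lemma key mu t : is_prob_measure mu -> 4 * ft_abs mu t - 3 <= ft_abs mu (2 * t).
Proof.
  intros Hm. set (A := ft_re mu t). set (B := ft_im mu t).
  unfold ft_abs at 1. fold A B. set (r := sqrt (A ^ 2 + B ^ 2)).
  assert (Hr : 0 <= r) by apply sqrt_pos.
  assert (H2 : 0 <= ft_abs mu (2 * t)) by apply sqrt_pos.
  destruct (Req_dec r 0) as [Hr0|Hr0]. { lra. }
  assert (Hr2 : r * r = A ^ 2 + B ^ 2) by (apply sqrt_sqrt; nra).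
  set (a := A / r). set (s := B / r).
  assert (Has : a ^ 2 + s ^ 2 = 1) by (unfold a, s; field_simplify; [|lra];
     rewrite <- Hr2; field; lra).
  assert (HaA : a * A + s * B = r) by (unfold a, s; field_simplify; [|lra];
     replace (A^2 + B^2) with (r * r) by lra; field; lra).
  pose proof (Z_plus _ _ _ _ (Z_scal (a^2 - s^2) _ _ (conv_cos mu (2 * t) Hm))
                (Z_scal (2 * a * s) _ _ (conv_sin mu (2 * t) Hm))) as HL.
  pose proof (Z_plus _ _ _ _ (Z_scal (4 * a) _ _ (conv_cos mu t Hm))
                (Z_plus _ _ _ _ (Z_scal (4 * s) _ _ (conv_sin mu t Hm))
                  (Z_scal (-3) _ _ (proj2 Hm)))) as HR.
  eassert (Hle := Z_le _ _ _ _ _ HR HL).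
  Unshelve. 2:{ intros k. simpl. destruct Hm as [Hp _]. pose proof (Hp k).
      replace (th k (2 * t)) with (2 * th k t) by (unfold th; ring).
      rewrite cos_2a, sin_2a. set (x := th k t). pose proof (sin2_cos2 x) as Hsc.
      unfold Rsqr in *.
      assert (0 <= mu k * (a * cos x + s * sin x - 1) ^ 2) by (apply Rmult_le_pos; [lra| apply pow2_ge_0]).
      assert (Eq : (a^2-s^2)*(cos x*cos x-sin x*sin x) + 2*a*s*(2*sin x*cos x)
                   = 2*(a * cos x + s * sin x)^2 - (a^2+s^2)*(sin x * sin x + cos x * cos x)) by ring.
      rewrite Has, Hsc, Rmult_1_r in Eq.
      assert (Eq2 : (a ^ 2 - s ^ 2) * (mu k * (cos x * cos x - sin x * sin x)) +
        2 * a * s * (mu k * (2 * sin x * cos x)) = mu k * (2*(a * cos x + s * sin x)^2 - 1))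
        by (rewrite <- Eq; ring).
      replace (a * (a * 1) - s * (s * 1)) with (a ^ 2 - s ^ 2) by ring.
      rewrite Eq2.
      replace (4 * a * (mu k * cos x) + (4 * s * (mu k * sin x) + -3 * mu k))
        with (mu k * (4 * (a * cos x + s * sin x) - 3)) by ring.
      replace (mu k * (2 * (a * cos x + s * sin x) ^ 2 - 1)) with
        (mu k * (4 * (a * cos x + s * sin x) - 3) + 2 * (mu k * (a * cos x + s * sin x - 1) ^ 2)) by ring.
      lra. }
  assert (Hcs := cs_ineq (a^2 - s^2) (2 * a * s) (ft_re mu (2 * t)) (ft_im mu (2 * t))
     ltac:(nra)).
  assert (E5 : 4 * a * ft_re mu t + (4 * s * ft_im mu t + -3 * 1) = 4 * r - 3) by (fold A B; rewrite <- HaA; ring).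
  unfold ft_abs. fold A B r. lra.
Qed.

Lemma iter mu t n : is_prob_measure mu ->
  1 - ft_abs mu (2 ^ n * t) <= 4 ^ n * (1 - ft_abs mu t).
Proof.
  intros Hm. induction n as [|n IH].
  - simpl. rewrite Rmult_1_l. lra.
  - pose proof (key mu (2 ^ n * t) Hm).
    replace (2 ^ S n * t) with (2 * (2 ^ n * t)) by (simpl; ring).
    simpl. lra.
Qed.

Lemma find_n b x n : 0 < b -> 0 < x <= b -> b <= 2 ^ n * x ->
  exists m, b <= 2 ^ m * x < 2 * b.
Proof.
  intros Hb. revert x. induction n as [|n IH]; intros x Hx Hn.
  - exists 0%nat. simpl in *. lra.
  - destruct (Rle_or_lt b x). { exists 0%nat. simpl. lra. }
    destruct (Rle_or_lt b (2 * x)). { exists 1%nat. simpl. lra. }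
    destruct (IH (2 * x)) as [m Hm]; [lra| simpl in Hn; lra |].
    exists (S m). simpl. lra.
Qed.

Lemma exists_big b x : 0 < b -> 0 < x -> exists n, b <= 2 ^ n * x.
Proof.
  intros Hb Hx. destruct (archimed (b / x)) as [H1 _].
  assert (Hz : (0 <= up (b / x))%Z).
  { apply le_IZR. assert (0 < b / x) by (apply Rdiv_lt_0_compat; lra). simpl. lra. }
  exists (Z.to_nat (up (b / x))).
  assert (INR (Z.to_nat (up (b/x))) = IZR (up (b/x))) by (rewrite INR_IZR_INZ, Z2Nat.id; auto).
  assert (forall n, INR n <= 2 ^ n).
  { induction n. simpl; lra. rewrite S_INR. simpl.
    assert (1 <= 2 ^ n) by (apply pow_R1_Rle; lra). lra. }
  pose proof (H0 (Z.to_nat (up (b / x)))).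
  assert (b / x <= 2 ^ Z.to_nat (up (b / x))) by lra.
  apply (Rmult_le_compat_r x) in H3; [|lra].
  unfold Rdiv in H3. rewrite Rmult_assoc, Rinv_l, Rmult_1_r in H3; lra.
Qed.

Theorem lemma2p1p5 (mu : Z -> R) (b c : R) :
  is_prob_measure mu ->
  0 < b < 1/4 ->
  0 <= c < 1 ->
  (forall t : R, b <= Rabs t < 1/2 -> ft_abs mu t <= c) ->
  forall t : R, Rabs t <= b ->
    ft_abs mu t <= 1 - (1 - c ^ 2) / (8 * b ^ 2) * t ^ 2.
Proof.
  intros Hm Hb Hc Hyp t Ht.
  destruct (Req_dec t 0) as [Ht0|Ht0].
  - subst t. replace ((1 - c ^ 2) / (8 * b ^ 2) * 0 ^ 2) with 0 by (simpl; field; lra).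
    unfold ft_abs.
    assert (E1 : ft_re mu 0 = 1).
    { unfold ft_re. apply Z_sum. eapply Z_ext; [|exact (proj2 Hm)].
      intros k. rewrite Rmult_0_r, cos_0. ring. }
    assert (E2 : ft_im mu 0 = 0).
    { unfold ft_im. pose proof (Z_scal 0 _ _ (proj2 Hm)) as Hz. rewrite Rmult_0_l in Hz. apply Z_sum. eapply Z_ext; [|exact Hz].
      intros k. rewrite Rmult_0_r, sin_0. ring. }
    rewrite E1, E2. replace (1 ^ 2 + 0 ^ 2) with 1 by ring. rewrite sqrt_1. lra.
  - assert (Hpos : 0 < Rabs t) by (apply Rabs_pos_lt; exact Ht0).
    destruct (exists_big b (Rabs t) (proj1 Hb) Hpos) as [n Hn].
    destruct (find_n b (Rabs t) n (proj1 Hb) (conj Hpos Ht) Hn) as [m Hmm].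
    assert (HP : 0 < 2 ^ m) by (apply pow_lt; lra).
    assert (Habs : Rabs (2 ^ m * t) = 2 ^ m * Rabs t)
      by (rewrite Rabs_mult, Rabs_right by lra; reflexivity).
    assert (HF := Hyp (2 ^ m * t) ltac:(rewrite Habs; lra)).
    pose proof (iter mu t m Hm) as HI.
    assert (E4 : 4 ^ m = 2 ^ m * 2 ^ m)
      by (rewrite <- Rpow_mult_distr; f_equal; ring).
    rewrite E4 in HI.
    set (P := 2 ^ m) in *. set (F := ft_abs mu t) in *.
    assert (Ht2 : t ^ 2 = Rabs t * Rabs t) by (rewrite <- Rabs_mult, Rabs_right; [ring|]; nra).
    assert (HPt : P * P * (t ^ 2) < 4 * b ^ 2).
    { rewrite Ht2. pose proof (Rabs_pos t). nra. }
    assert (H1F : 0 <= 1 - F) by nra.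
    assert (Hg : (1 - c ^ 2) * t ^ 2 <= 8 * b ^ 2 * (1 - F)).
    { assert (0 <= (1-c)^2 * t^2) by (apply Rmult_le_pos; apply pow2_ge_0).
      assert ((1 - c^2) * t^2 <= 2 * (1 - c) * t^2) by nra.
      assert (0 <= (1-c) * (4 * b^2 - P * P * t^2)) by (apply Rmult_le_pos; lra).
      assert (0 <= b^2 * (P * P * (1 - F) - (1 - c))) by (apply Rmult_le_pos; [apply pow2_ge_0|lra]).
      assert (P * P * (2 * (1 - c) * t^2) <= P * P * (8 * b^2 * (1 - F))) by nra.
      assert (0 < P * P) by nra.
      apply Rmult_le_reg_l in H3; [|exact H4]. lra. }
    assert (Hb2 : 0 < 8 * b ^ 2) by nra.
    apply (Rmult_le_reg_l (8 * b ^ 2)); [lra|].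
    replace (8 * b ^ 2 * (1 - (1 - c ^ 2) / (8 * b ^ 2) * t ^ 2))
      with (8 * b ^ 2 - (1 - c ^ 2) * t ^ 2) by (field; lra).
    lra.
Qed.
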